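(* If $R$ is a closed $\forall^+$ type, then for every environment $\gamma$, $\llbracket R\rrbracket_\gamma$ is a partial equivalence relation (symmetric and transitive).
   Context: Terms are those of the pure untyped $\lambda$-calculus, up to $\alpha$-equivalence; $=_{\beta\eta}$ is $\beta\eta$-convertibility. Relational types: $R ::= X \mid R\to R' \mid \forall X.R \mid R^{\cup} \mid R\cdot R' \mid t$ (last form: promotion of a term). A relation on terms is $\beta\eta$-closed if closed under replacing either related term by a $\beta\eta$-equal one; $\mathcal{R}$ is the set of such relations; environments $\gamma$ map finitely many type variables to $\mathcal{R}$. Interpretation: $\llbracket X\rrbracket_\gamma=\gamma(X)$; $t\,\llbracket R\to R'\rrbracket_\gamma\,t'$ iff for all $a,a'$ with $a\,\llbracket R\rrbracket_\gamma\,a'$, $t\,a\,\llbracket R'\rrbracket_\gamma\,t'\,a'$; $\llbracket \forall X.R\rrbracket_\gamma=\bigcap_{r\in\mathcal{R}}\llbracket R\rrbracket_{\gamma[X\mapsto r]}$; $t\,\llbracket R^\cup\rrbracket_\gamma\,t'$ iff $t'\,\llbracket R\rrbracket_\gamma\,t$; $t\,\llbracket R\cdot R'\rrbracket_\gamma\,t'$ iff $\exists t''$, $t\,\llbracket R\rrbracket_\gamma\,t''$ and $t''\,\llbracket R'\rrbracket_\gamma\,t'$; $\llbracket \hat t\rrbracket_\gamma=\{(t,t')\mid \hat t\,t=_{\beta\eta}t'\}$. Polarities $p\in\{+,-\}$, $\bar p$ the other; $\forall^p$: type variables are $\forall^p$; if $R$ is $\forall^{\bar p}$ and $R'$ is $\forall^p$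 then $R\to R'$ is $\forall^p$; if $R$ is $\forall^+$ then $\forall X.R$ is $\forall^+$; if $R$ is $\forall^p$ then so is $R^\cup$; a promotion of $t$ with $t=_{\beta\eta}\lambda x.x$ is $\forall^p$. *)

(* Defs.v *)
From Stdlib Require Import Arith Relations.

Inductive term : Type :=
| Var : nat -> term
| App : term -> term -> term
| Lam : term -> term.

Fixpoint lift (c : nat) (t : term) : term :=
  match t with
  | Var n => if n <? c then Var n else Var (S n)
  | App a b => App (lift c a) (lift c b)
  | Lam b => Lam (lift (S c) b)
  end.

Fixpoint subst (k : nat) (u : term) (t : term) : term :=
  match t with
  | Var n => if n <? k then Var n else if n =? k then u else Var (pred n)
  | App a b => App (subst k u a) (subst k u b)
  | Lam b => Lam (subst (S k) (lift 0 u) b)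
  end.

Inductive step : term -> term -> Prop :=
| st_beta : forall b a, step (App (Lam b) a) (subst 0 a b)
| st_eta : forall t, step (Lam (App (lift 0 t) (Var 0))) t
| st_appl : forall a a' b, step a a' -> step (App a b) (App a' b)
| st_appr : forall a b b', step b b' -> step (App a b) (App a b')
| st_lam : forall b b', step b b' -> step (Lam b) (Lam b').

Definition beq : term -> term -> Prop := clos_refl_sym_trans term step.

Definition rel := term -> term -> Prop.

Definition bclosed (r : rel) : Prop :=
  forall t1 t1' t2 t2', beq t1 t1' -> beq t2 t2' -> r t1 t2 -> r t1' t2'.

Inductive rtype : Type :=
| RVar : nat -> rtype
| RArr : rtype -> rtype -> rtype
| RAll : nat -> rtype -> rtype
| RConv : rtype -> rtype
| RComp : rtype -> rtype -> rtype
| RProm : term -> rtype.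

Definition env := nat -> rel.

Definition upd (g : env) (X : nat) (r : rel) : env :=
  fun Y => if Y =? X then r else g Y.

Fixpoint interp (R : rtype) (g : env) : rel :=
  match R with
  | RVar X => g X
  | RArr R1 R2 => fun t t' =>
      forall a a', interp R1 g a a' -> interp R2 g (App t a) (App t' a')
  | RAll X R1 => fun t t' =>
      forall r, bclosed r -> interp R1 (upd g X r) t t'
  | RConv R1 => fun t t' => interp R1 g t' t
  | RComp R1 R2 => fun t t' =>
      exists t'', interp R1 g t t'' /\ interp R2 g t'' t'
  | RProm u => fun t t' => beq (App u t) t'
  end.

Fixpoint free_in (X : nat) (R : rtype) : Prop :=
  match R with
  | RVar Y => X = Y
  | RArr R1 R2 => free_in X R1 \/ free_in X R2
  | RAll Y R1 => X <> Y /\ free_in X R1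
  | RConv R1 => free_in X R1
  | RComp R1 R2 => free_in X R1 \/ free_in X R2
  | RProm _ => False
  end.

Definition closed_rtype (R : rtype) : Prop := forall X, ~ free_in X R.

(* polarity: true = +, false = - ; forallp p R means R is forall^p *)
Inductive forallp : bool -> rtype -> Prop :=
| fp_var : forall p X, forallp p (RVar X)
| fp_arr : forall p R1 R2,
    forallp (negb p) R1 -> forallp p R2 -> forallp p (RArr R1 R2)
| fp_all : forall X R1, forallp true R1 -> forallp true (RAll X R1)
| fp_conv : forall p R1, forallp p R1 -> forallp p (RConv R1)
| fp_prom : forall p t, beq t (Lam (Var 0)) -> forallp p (RProm t).

Definition PER (r : rel) : Prop :=
  (forall t t', r t t' -> r t' t) /\
  (forall t t' t'', r t t' -> r t' t'' -> r t t'').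

(* Main.v *)
From Stdlib Require Import Arith Relations Lia.
Require Import Defs.

Ltac crush :=
  repeat (cbn [lift subst]; match goal with
  | |- context [?a <? ?b] => destruct (Nat.ltb_spec a b)
  | |- context [?a =? ?b] => destruct (Nat.eqb_spec a b)
  end); cbn [lift subst]; try (f_equal; lia); try lia.

Lemma lift_lift : forall t i j, i <= j -> lift (S j) (lift i t) = lift i (lift j t).
Proof.
  induction t; intros i j Hij.
  - crush.
  - simpl; f_equal; auto.
  - simpl; f_equal; apply IHt; lia.
Qed.

Lemma lift_subst_a : forall t k j u, k <= j ->
  lift j (subst k u t) = subst k (lift j u) (lift (S j) t).
Proof.
  induction t; intros k j u Hkj.
  - simpl. destruct (Nat.ltb_spec n k).
    + crush.
    + destruct (Nat.eqb_spec n k).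
      * subst. crush.
      * crush.
  - simpl; f_equal; auto.
  - simpl; f_equal. rewrite IHt by lia. f_equal. apply lift_lift; lia.
Qed.

Lemma lift_subst_b : forall t k j u, j <= k ->
  lift j (subst k u t) = subst (S k) (lift j u) (lift j t).
Proof.
  induction t; intros k j u Hkj.
  - simpl. destruct (Nat.ltb_spec n k).
    + crush.
    + destruct (Nat.eqb_spec n k).
      * subst. crush.
      * crush.
  - simpl; f_equal; auto.
  - simpl; f_equal. rewrite IHt by lia. f_equal. apply lift_lift; lia.
Qed.

Lemma subst_lift : forall t k u, subst k u (lift k t) = t.
Proof.
  induction t; intros k u.
  - crush.
  - simpl; f_equal; auto.
  - simpl; f_equal; auto.
Qed.

Lemma subst_subst : forall b j k w a, j <= k ->
  subst k w (subst j a b) = subst j (subst k w a) (subst (S k) (lift j w) b).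
Proof.
  induction b; intros j k w a Hjk.
  - simpl. destruct (Nat.ltb_spec n j).
    + crush.
    + destruct (Nat.eqb_spec n j).
      * subst. crush.
      * destruct (Nat.ltb_spec n (S k)).
        { crush. }
        destruct (Nat.eqb_spec n (S k)).
        { subst. simpl. destruct (Nat.ltb_spec k k); [lia|].
          rewrite Nat.eqb_refl. symmetry. apply subst_lift. }
        crush.
  - simpl; f_equal; auto.
  - simpl; f_equal. rewrite IHb by lia. f_equal.
    + symmetry. rewrite <- lift_subst_b by lia. reflexivity.
    + f_equal. apply lift_lift; lia.
Qed.

Lemma step_lift : forall u v, step u v -> forall k, step (lift k u) (lift k v).
Proof.
  induction 1; intros k; simpl.
  - rewrite (lift_subst_a b 0 k a) by lia. constructor.
  - rewrite lift_lift by lia. constructor.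
  - constructor; auto.
  - constructor; auto.
  - constructor; auto.
Qed.

Lemma step_subst : forall u v, step u v -> forall k w, step (subst k w u) (subst k w v).
Proof.
  induction 1; intros k w; simpl.
  - rewrite (subst_subst b 0 k w a) by lia. simpl. constructor.
  - rewrite <- lift_subst_b by lia. constructor.
  - constructor; auto.
  - constructor; auto.
  - constructor; auto.
Qed.

Lemma beq_refl : forall t, beq t t.
Proof. intros; apply rst_refl. Qed.
Lemma beq_sym : forall t t', beq t t' -> beq t' t.
Proof. intros; apply rst_sym; auto. Qed.
Lemma beq_trans : forall t t' t'', beq t t' -> beq t' t'' -> beq t t''.
Proof. intros; eapply rst_trans; eauto. Qed.
Lemma beq_step : forall t t', step t t' -> beq t t'.
Proof. intros; apply rst_step; auto. Qed.

Lemma beq_map : forall (f : term -> term), (forall u v, step u v -> step (f u) (f v)) ->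
  forall u v, beq u v -> beq (f u) (f v).
Proof.
  intros f Hf u v H; induction H.
  - apply beq_step; auto.
  - apply beq_refl.
  - apply beq_sym; auto.
  - eapply beq_trans; eauto.
Qed.

Lemma beq_appl : forall a a' b, beq a a' -> beq (App a b) (App a' b).
Proof. intros. apply (beq_map (fun x => App x b)); auto. intros; constructor; auto. Qed.
Lemma beq_appr : forall a b b', beq b b' -> beq (App a b) (App a b').
Proof. intros. apply (beq_map (fun x => App a x)); auto. intros; constructor; auto. Qed.
Lemma beq_app : forall a a' b b', beq a a' -> beq b b' -> beq (App a b) (App a' b').
Proof. intros. eapply beq_trans. apply beq_appl; eauto. apply beq_appr; auto. Qed.
Lemma beq_lam : forall b b', beq b b' -> beq (Lam b) (Lam b').
Proof. intros. apply (beq_map Lam); auto. intros; constructor; auto. Qed.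

Fixpoint cl (k : nat) (t : term) : Prop :=
  match t with
  | Var n => n < k
  | App a b => cl k a /\ cl k b
  | Lam b => cl (S k) b
  end.

Lemma cl_mono : forall t k k', cl k t -> k <= k' -> cl k' t.
Proof.
  induction t; simpl; intros k k' H Hk.
  - lia.
  - destruct H; split; eauto.
  - apply (IHt (S k)); auto; lia.
Qed.

Lemma cl_ex : forall t, exists k, cl k t.
Proof.
  induction t.
  - exists (S n); simpl; lia.
  - destruct IHt1 as [k1 H1], IHt2 as [k2 H2]. exists (max k1 k2); simpl; split;
    eapply cl_mono; eauto; lia.
  - destruct IHt as [k H]. exists k. simpl. eapply cl_mono; eauto.
Qed.

Lemma cl_lift : forall t k j, cl k t -> cl (S k) (lift j t).
Proof.
  induction t; simpl; intros k j H.
  - destruct (Nat.ltb_spec n j); simpl; lia.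
  - destruct H; split; auto.
  - apply IHt; auto.
Qed.

Lemma subst_cl : forall t k u, cl k t -> subst k u t = t.
Proof.
  induction t; simpl; intros k u H.
  - destruct (Nat.ltb_spec n k); [reflexivity | lia].
  - destruct H; f_equal; auto.
  - f_equal; auto.
Qed.

Lemma extensionality : forall t t', (forall a, beq (App t a) (App t' a)) -> beq t t'.
Proof.
  intros t t' H.
  destruct (cl_ex t) as [k1 H1], (cl_ex t') as [k2 H2].
  set (n := max k1 k2).
  assert (C1 : cl n t) by (eapply cl_mono; eauto; lia).
  assert (C2 : cl n t') by (eapply cl_mono; eauto; lia).
  specialize (H (Var n)).
  apply (beq_map (lift 0)) in H; [| intros; apply step_lift; auto].
  apply (beq_map (subst (S n) (Var 0))) in H; [| intros; apply step_subst; auto].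
  simpl in H.
  rewrite !subst_cl in H by (apply cl_lift; auto).
  rewrite Nat.ltb_irrefl, Nat.eqb_refl in H.
  eapply beq_trans. apply beq_sym, beq_step, st_eta.
  eapply beq_trans. apply beq_lam, H. apply beq_step, st_eta.
Qed.

Lemma prom_id : forall u t, beq u (Lam (Var 0)) -> beq (App u t) t.
Proof.
  intros. eapply beq_trans. apply beq_appl; eauto.
  apply beq_step. apply st_beta.
Qed.

Lemma upd_bclosed : forall g X r, (forall Y, bclosed (g Y)) -> bclosed r ->
  forall Y, bclosed (upd g X r Y).
Proof. intros. unfold upd. destruct (Y =? X); auto. Qed.

Lemma interp_bclosed : forall R g, (forall X, bclosed (g X)) -> bclosed (interp R g).
Proof.
  induction R; intros g Hg t1 t1' t2 t2' E1 E2; simpl.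
  - apply Hg; auto.
  - intros H a a' Ha. eapply IHR2; [auto | | | apply H; eauto];
    apply beq_appl; auto.
  - intros H r Hr. eapply IHR; [apply upd_bclosed; auto | | | apply H]; eauto.
  - intros H. eapply IHR; eauto.
  - intros [t'' [Ha Hb]]. exists t''. split.
    + eapply IHR1; [auto | eauto | apply beq_refl | auto].
    + eapply IHR2; [auto | apply beq_refl | eauto | auto].
  - intros H. eapply beq_trans; [| eapply beq_trans; [apply H | apply E2]].
    apply beq_appr. apply beq_sym; auto.
Qed.

Lemma interp_free : forall R g g',
  (forall X, free_in X R -> forall t t', g X t t' <-> g' X t t') ->
  forall t t', interp R g t t' <-> interp R g' t t'.
Proof.
  induction R; intros g g' Hg; simpl.
  - intros; apply Hg; simpl; auto.
  - intros t t'. split; intros H a a' Ha.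
    + apply (IHR2 g g'); [intros; apply Hg; simpl; auto|].
      apply H. apply (IHR1 g g'); [intros; apply Hg; simpl; auto| auto].
    + apply (IHR2 g g'); [intros; apply Hg; simpl; auto|].
      apply H. apply (IHR1 g g'); [intros; apply Hg; simpl; auto| auto].
  - assert (Hu : forall r, forall X, free_in X R -> forall t t',
       upd g n r X t t' <-> upd g' n r X t t').
    { intros r X HX t t'. unfold upd. destruct (Nat.eqb_spec X n).
      - tauto.
      - apply Hg. simpl; auto. }
    intros t t'. split; intros H r Hr.
    + apply (IHR (upd g n r) (upd g' n r)); auto.
    + apply (IHR (upd g n r) (upd g' n r)); auto.
  - intros; apply IHR; auto.
  - intros t t'. split; intros [t'' [Ha Hb]]; exists t''; split.
    + apply (IHR1 g g'); auto. intros; apply Hg; simpl; auto.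
    + apply (IHR2 g g'); auto. intros; apply Hg; simpl; auto.
    + apply (IHR1 g g'); auto. intros; apply Hg; simpl; auto.
    + apply (IHR2 g g'); auto. intros; apply Hg; simpl; auto.
  - tauto.
Qed.

Definition idenv : env := fun _ => beq.

Lemma idenv_upd : forall R X t t',
  interp R (upd idenv X beq) t t' <-> interp R idenv t t'.
Proof.
  intros. apply interp_free. intros Y _ a b. unfold upd, idenv. destruct (Y =? X); tauto.
Qed.

Lemma id_props : forall p R, forallp p R ->
  (p = true -> forall t t', interp R idenv t t' -> beq t t') /\
  (p = false -> forall t t', beq t t' -> interp R idenv t t').
Proof.
  induction 1; simpl.
  - split; auto.
  - destruct IHforallp1 as [A1 B1], IHforallp2 as [A2 B2].
    split; intros Hp; subst p; simpl in *.
    + intros t t' Hf. apply extensionality. intros a.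
      apply A2; auto. apply Hf. apply B1; auto. apply beq_refl.
    + intros t t' E a a' Ha. apply B2; auto. apply beq_app; auto.
  - destruct IHforallp as [A B]. split; intros Hp; [|discriminate].
    intros t t' Ht. apply A; auto. apply (proj1 (idenv_upd R1 X t t')). apply Ht.
    intros t1 t1' t2 t2' E1 E2 E3. apply beq_trans with t1; [apply beq_sym; auto|].
    eapply beq_trans; eauto.
  - destruct IHforallp as [A B]. split; intros Hp t t' Ht.
    + apply beq_sym. apply A; auto.
    + apply B; auto. apply beq_sym; auto.
  - split; intros _ t0 t' Ht.
    + apply beq_trans with (App t t0); [apply beq_sym, prom_id; auto| exact Ht].
    + apply beq_trans with t0; [apply prom_id; auto| exact Ht].
Qed.

Theorem mainTheorem12 (R : rtype) (g : env) :
  closed_rtype R -> forallp true R ->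
  (forall X, bclosed (g X)) ->
  PER (interp R g).
Proof.
  intros Hc Hp Hg.
  assert (Hid : forall t t', interp R g t t' -> beq t t').
  { intros t t' H. apply (proj1 (id_props true R Hp)); auto.
    apply (interp_free R g idenv); auto. intros X HX. exfalso; apply (Hc X); auto. }
  pose proof (interp_bclosed R g Hg) as Hb.
  split.
  - intros t t' H. pose proof (Hid _ _ H) as E.
    apply (Hb t t' t' t); [exact E | apply beq_sym; exact E | exact H].
  - intros t t' t'' H1 H2. pose proof (Hid _ _ H2) as E.
    apply (Hb t t t' t''); [apply beq_refl | exact E | exact H1].
Qed.
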